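(* Let $n\ge 3$ be odd. For any three distinct indices $i,j,k\in[n]$, in $R/J_n$ we have $x_{ij}\,p^+_{n,k}=x_{jk}\,p^+_{n,i}$.
   Context: Let $\mathbbm{k}$ be a field, $[n]=\{1,\dots,n\}$, $R=\mathbbm{k}[x_{ij}:1\le i\le j\le n]$ with $x_{ij}=x_{ji}$; exponent vectors in $\mathbb{N}^{\binom{n+1}{2}}$ with basis $e_{ij}=e_{ji}$. $V_n$ is the $n\times\binom{n+1}{2}$ matrix whose column indexed by $jk$ is $e_j+e_k\in\mathbb{Z}^n$; for $\mathbf b\in\mathbb{N}^n$, $V_n^{-1}[\mathbf b]=\{u\in\mathbb{N}^{\binom{n+1}{2}}:V_nu=\mathbf b\}$. $J_n$ is generated by the principal $2$-minors $x_{ii}x_{jj}-x_{ij}^2$. With $[ij|kl]:=e_{ik}+e_{jl}-e_{il}-e_{jk}$, $L'_n$ is the lattice generated by the $[ij|ij]$; two points of a fiber are equivalent if their difference lies in $L'_n$. For $n$ odd and $i\in[n]$, $p^+_{n,i}\in R/J_n$ is the sum of $x^{\mathbf a}$ over the equivalence classes $\mathbf a$ of $V_n^{-1}[(n-2,\dots,n-2)+e_i]$ modulo $L'_n$. *)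

(* Defs.v *)
From HB Require Import structures.
From mathcomp Require Import all_boot all_order all_algebra.
From mathcomp Require Import mpoly.
From Stdlib Require Import ClassicalEpsilon.
Set Implicit Arguments. Unset Strict Implicit. Unset Printing Implicit Defensive.
Import Order.TTheory GRing.Theory Num.Theory.
Local Open Scope ring_scope.

(* Indices [n] = {1..n} are represented 0-based by 'I_n. *)

(* Index set of the variables x_{ij}, i <= j (so that x_{ij} = x_{ji}). *)
Definition Pair (n : nat) := {p : 'I_n * 'I_n | (p.1 <= p.2)%N}.

Definition sym_pair (n : nat) (i j : 'I_n) : Pair n :=
  match leqP i j with
  | LeqNotGtn h => exist _ (i, j) h
  | GtnNotLeq h => exist (fun p : 'I_n * 'I_n => (p.1 <= p.2)%N) (j, i) (ltnW h)
  end.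

Definition nvar (n : nat) := #|{: Pair n}|.

Definition vidx (n : nat) (p : Pair n) : 'I_(nvar n) := enum_rank p.

Definition Rpoly (k : fieldType) (n : nat) := {mpoly k[nvar n]}.

Definition xv (k : fieldType) (n : nat) (i j : 'I_n) : Rpoly k n :=
  'X_(vidx (sym_pair i j)).

Definition expo (n : nat) (m : 'X_{1..nvar n}) (p : Pair n) : nat := m (vidx p).

(* (V_n u)_v : column jk of V_n is e_j + e_k *)
Definition Vn (n : nat) (m : 'X_{1..nvar n}) (v : 'I_n) : nat :=
  (\sum_(p : Pair n) expo m p * ((val p).1 == v) + (\sum_(p : Pair n) expo m p * ((val p).2 == v)))%N.

Definition ebasis (n : nat) (a b : 'I_n) (p : Pair n) : int :=
  ((sym_pair a b == p) : nat)%:Z.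

Definition brk (n : nat) (i j k l : 'I_n) (p : Pair n) : int :=
  ebasis i k p + ebasis j l p - ebasis i l p - ebasis j k p.

Definition inLn' (n : nat) (d : Pair n -> int) : Prop :=
  exists c : 'I_n -> 'I_n -> int,
    forall p, d p = \sum_(i < n) \sum_(j < n) c i j * brk i j i j p.

Definition pbool (P : Prop) : bool :=
  if excluded_middle_informative P then true else false.

Definition Lequiv (n : nat) (a b : 'X_{1..nvar n}) : bool :=
  pbool (inLn' (fun p => (expo a p)%:Z - (expo b p)%:Z)).

(* degree bound large enough to contain the whole fiber V_n^{-1}[b]
   (a fiber element has total degree (sum_v b_v)/2 <= sum_v b_v) *)
Definition fbound (n : nat) (b : 'I_n -> nat) : nat := (\sum_(v < n) b v).+1.

Definition fiber (n : nat) (b : 'I_n -> nat) : {set (bmultinom (nvar n) (fbound b))} :=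
  [set m : (bmultinom (nvar n) (fbound b)) | [forall v, Vn (bmnm m) v == b v]].

Definition fclasses (n : nat) (b : 'I_n -> nat) :=
  equivalence_partition (fun a b0 : (bmultinom (nvar n) (fbound b)) => Lequiv (bmnm a) (bmnm b0))
                        (fiber b).

(* x^a for an equivalence class a (computed on a chosen representative;
   in R/J_n the value does not depend on the representative) *)
Definition class_mono (k : fieldType) (n : nat) (b : 'I_n -> nat)
    (C : {set (bmultinom (nvar n) (fbound b))}) : Rpoly k n :=
  match [pick a in C] with Some a => 'X_[bmnm a] | None => 0 end.

Definition bplus (n : nat) (i : 'I_n) : 'I_n -> nat :=
  fun v => ((n - 2) + (v == i))%N.

(* p^+_{n,i} (a representative in R of the element of R/J_n) *)
Definition pplus (k : fieldType) (n : nat) (i : 'I_n) : Rpoly k n :=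
  \sum_(C in fclasses (bplus i)) class_mono k C.

Definition inJn (k : fieldType) (n : nat) (f : Rpoly k n) : Prop :=
  exists c : 'I_n -> 'I_n -> Rpoly k n,
    f = \sum_(i < n) \sum_(j < n) c i j * (xv k i i * xv k j j - xv k i j ^+ 2).

(* Main.v *)
Require Import Defs.
From HB Require Import structures.
From mathcomp Require Import all_boot all_order all_algebra.
From mathcomp Require Import mpoly.
From mathcomp Require Import zify ring.
From Stdlib Require Import ClassicalEpsilon.
Set Implicit Arguments. Unset Strict Implicit. Unset Printing Implicit Defensive.
Import Order.TTheory GRing.Theory Num.Theory.
Local Open Scope ring_scope.

Section Basics.
Variable n : nat.
Implicit Types (a b c d u v : 'I_n) (p q : Pair n) (m : 'X_{1..nvar n}).

Lemma sym_pair_val p : sym_pair (val p).1 (val p).2 = p.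
Proof.
case: p => [[a b] h] /=; rewrite /sym_pair.
case: leqP => h2; first by apply: val_inj.
by exfalso; move: h; rewrite leqNgt h2.
Qed.

Lemma sym_pairE a b : val (sym_pair a b) = if (a <= b)%N then (a, b) else (b, a).
Proof. by rewrite /sym_pair; case: leqP. Qed.

Lemma ord_eqE a b : (a == b) = (val a == val b). Proof. by []. Qed.

Lemma sym_pairC a b : sym_pair a b = sym_pair b a.
Proof.
apply: val_inj; rewrite !sym_pairE.
case: (leqP a b) => h1; case: (leqP b a) => h2 //.
all: try (have /eqP -> : a == b by rewrite ord_eqE eqn_leq h1 h2).
all: try by [].
all: exfalso; lia.
Qed.

Lemma sym_pair_eq a b c d :
  (sym_pair a b == sym_pair c d) = ((a == c) && (b == d)) || ((a == d) && (b == c)).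
Proof.
rewrite -(inj_eq val_inj) !sym_pairE.
case: (leqP a b) => h1; case: (leqP c d) => h2; rewrite xpair_eqE -!(inj_eq val_inj) /=;
case: (eqVneq (a:nat) (c:nat)) => e1; case: (eqVneq (b:nat) (d:nat)) => e2;
case: (eqVneq (a:nat) (d:nat)) => e3; case: (eqVneq (b:nat) (c:nat)) => e4 //=; lia.
Qed.

Lemma sym_pair_offd a b : ((val (sym_pair a b)).1 != (val (sym_pair a b)).2) = (a != b).
Proof.
rewrite sym_pairE; case: leqP => h //=; rewrite [b == a]eq_sym //.
Qed.


Local Open Scope nat_scope.

Definition Um p : 'X_{1..nvar n} := U_(vidx p)%MM.

Lemma expoD m1 m2 p : expo (m1 + m2)%MM p = expo m1 p + expo m2 p.
Proof. by rewrite /expo mnmDE. Qed.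

Lemma expoB m1 m2 p : expo (m1 - m2)%MM p = expo m1 p - expo m2 p.
Proof. by rewrite /expo mnmBE. Qed.

Lemma expoU q p : expo (Um q) p = (q == p).
Proof. by rewrite /expo /Um mnm1E /vidx (inj_eq enum_rank_inj). Qed.

Lemma mono_ext m1 m2 : (forall p, expo m1 p = expo m2 p) -> m1 = m2.
Proof. by move=> h; apply/mnmP => i; rewrite -(enum_valK i); apply: h. Qed.

Lemma sum_ind u0 : \sum_(u < n) (u == u0) = 1.
Proof. by rewrite (bigD1 u0) //= eqxx big1 // => u /negbTE ->. Qed.

Lemma sum_indP (q : Pair n) (F : Pair n -> nat) : \sum_p F p * (q == p) = F q.
Proof.
rewrite (bigD1 q) //= eqxx muln1 big1 ?addn0 // => p hp.
by rewrite eq_sym (negbTE hp) muln0.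
Qed.

Lemma VnD m1 m2 v : Vn (m1 + m2)%MM v = Vn m1 v + Vn m2 v.
Proof.
rewrite /Vn; under eq_bigr do rewrite expoD mulnDl.
under [X in _ + X]eq_bigr do rewrite expoD mulnDl.
by rewrite !big_split /= addnACA.
Qed.

Lemma VnU q v : Vn (Um q) v = ((val q).1 == v) + ((val q).2 == v).
Proof.
rewrite /Vn; under eq_bigr do rewrite expoU mulnC.
under [X in _ + X]eq_bigr do rewrite expoU mulnC.
rewrite (sum_indP q (fun p => ((val p).1 == v) : nat)).
by rewrite (sum_indP q (fun p => ((val p).2 == v) : nat)).
Qed.

Lemma VnU_sym a b v : Vn (Um (sym_pair a b)) v = (a == v) + (b == v).
Proof. by rewrite VnU sym_pairE; case: leqP => //= _; rewrite addnC. Qed.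

Lemma expo_sum m q : expo m q = \sum_p expo m p * (q == p).
Proof. by rewrite sum_indP. Qed.

Lemma count_pt v p :
  \sum_u (sym_pair v u == p) + (sym_pair v v == p) = ((val p).1 == v) + ((val p).2 == v).
Proof.
case: p => [[a b] hab] /=.
have E : exist (fun p : 'I_n * 'I_n => (p.1 <= p.2)) (a, b) hab = sym_pair a b.
  by rewrite -[LHS]sym_pair_val.
rewrite E.
under eq_bigr do rewrite sym_pair_eq.
rewrite sym_pair_eq.
case: (eqVneq a b) => [<-|nab].
  under eq_bigr do rewrite orbb.
  rewrite orbb andbb; case: (eqVneq v a) => [eva|nva] /=.
    by rewrite sum_ind.
  by rewrite big1.
case: (eqVneq v a) => [eva|nva] /=.
  rewrite eva (negbTE nab) /=; under eq_bigr do rewrite orbF.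
  by rewrite sum_ind eq_sym (negbTE nab).
case: (eqVneq v b) => [evb|nvb] /=.
  by rewrite sum_ind.
by rewrite big1.
Qed.

Lemma Vn_alt m v : Vn m v = \sum_u expo m (sym_pair v u) + expo m (sym_pair v v).
Proof.
under [X in _ = X + _]eq_bigr do rewrite expo_sum.
rewrite exchange_big /= (expo_sum m (sym_pair v v)) -big_split /=.
rewrite /Vn -big_split /=; apply: eq_bigr => p _.
by rewrite -big_distrr /= -mulnDr -mulnDr count_pt.
Qed.

End Basics.

Section JL.
Variable k : fieldType.
Variable n : nat.
Implicit Types (a b c d u v : 'I_n) (p q : Pair n) (m : 'X_{1..nvar n}) (f g h : Rpoly k n).

Lemma inJn0 : inJn (0 : Rpoly k n).
Proof. by exists (fun _ _ => 0); rewrite big1 // => i _; rewrite big1 // => j _; rewrite mul0r. Qed.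

Lemma inJnD f g : inJn f -> inJn g -> inJn (f + g).
Proof.
move=> [c1 ->] [c2 ->]; exists (fun i j => c1 i j + c2 i j).
rewrite -big_split /=; apply: eq_bigr => i _.
by rewrite -big_split /=; apply: eq_bigr => j _; rewrite mulrDl.
Qed.

Lemma inJnM h f : inJn f -> inJn (h * f).
Proof.
move=> [c1 ->]; exists (fun i j => h * c1 i j).
rewrite mulr_sumr; apply: eq_bigr => i _.
by rewrite mulr_sumr; apply: eq_bigr => j _; rewrite mulrA.
Qed.

Lemma inJnN f : inJn f -> inJn (- f).
Proof. by move=> h; rewrite -mulN1r; apply: inJnM. Qed.

Lemma inJnB f g : inJn f -> inJn g -> inJn (f - g).
Proof. by move=> h1 h2; apply: inJnD => //; apply: inJnN. Qed.

Lemma inJn_gen a b : inJn (xv k a a * xv k b b - xv k a b ^+ 2).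
Proof.
exists (fun i j => if (i == a) && (j == b) then 1 else 0).
rewrite (bigD1 a) //= [X in _ = _ + X]big1 ?addr0; last first.
  by move=> i /negbTE hi; rewrite big1 // => j _; rewrite hi /= mul0r.
rewrite (bigD1 b) //= [X in _ = _ + X]big1 ?addr0; last first.
  by move=> j /negbTE hj; rewrite hj andbF mul0r.
by rewrite !eqxx mul1r.
Qed.

Lemma inJn_sum (I : Type) (r : seq I) (P : pred I) (F : I -> Rpoly k n) :
  (forall i, P i -> inJn (F i)) -> inJn (\sum_(i <- r | P i) F i).
Proof.
move=> h; elim/big_ind: _ => //; [exact: inJn0 | exact: inJnD].
Qed.

Lemma inLn'_ext (d1 d2 : Pair n -> int) : (forall p, d1 p = d2 p) -> inLn' d1 -> inLn' d2.
Proof. by move=> e [c hc]; exists c => p; rewrite -e. Qed.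

Lemma inLn'_add (d1 d2 : Pair n -> int) : inLn' d1 -> inLn' d2 -> inLn' (fun p => d1 p + d2 p).
Proof.
move=> [c1 h1] [c2 h2]; exists (fun i j => c1 i j + c2 i j) => p.
rewrite h1 h2 -big_split /=; apply: eq_bigr => i _.
by rewrite -big_split /=; apply: eq_bigr => j _; rewrite mulrDl.
Qed.

Lemma inLn'_opp (d1 : Pair n -> int) : inLn' d1 -> inLn' (fun p => - d1 p).
Proof.
move=> [c1 h1]; exists (fun i j => - c1 i j) => p.
rewrite h1 -sumrN; apply: eq_bigr => i _.
by rewrite -sumrN; apply: eq_bigr => j _; rewrite mulNr.
Qed.

Lemma inLn'_gen a b : inLn' (fun p => brk a b a b p).
Proof.
exists (fun i j => if (i == a) && (j == b) then 1 else 0) => p.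
rewrite (bigD1 a) //= [X in _ = _ + X]big1 ?addr0; last first.
  by move=> i /negbTE hi; rewrite big1 // => j _; rewrite hi /= mul0r.
rewrite (bigD1 b) //= [X in _ = _ + X]big1 ?addr0; last first.
  by move=> j /negbTE hj; rewrite hj andbF mul0r.
by rewrite !eqxx mul1r.
Qed.

End JL.

Lemma int_par (x y : nat) (z : int) : x%:Z - y%:Z = 2 * z -> odd x = odd y.
Proof.
move=> h. rewrite -[x]odd_double_half -[y]odd_double_half in h.
by case: (odd x) h; case: (odd y) => //= h; lia.
Qed.

Lemma le1_odd (x : nat) : (x <= 1)%N -> x = odd x.
Proof. by case: x => [|[]]. Qed.

Section Reduce.
Variable k : fieldType.
Variable n : nat.
Implicit Types (a b c d u v : 'I_n) (p q : Pair n) (m : 'X_{1..nvar n}).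

Definition offd p : bool := (val p).1 != (val p).2.
Definition normal m := forall p, offd p -> (expo m p <= 1)%N.
Definition samepar m1 m2 := forall p, offd p -> odd (expo m1 p) = odd (expo m2 p).
Definition Lrel m1 m2 := inLn' (fun p => (expo m1 p)%:Z - (expo m2 p)%:Z).
Definition sameV m1 m2 := forall v, Vn m1 v = Vn m2 v.
Definition Xm m : Rpoly k n := 'X_[m].
Definition mu m := (\sum_p offd p * expo m p)%N.

Lemma offd_sym a b : offd (sym_pair a b) = (a != b).
Proof. exact: sym_pair_offd. Qed.

Lemma diag_eq p : ~~ offd p -> p = sym_pair (val p).1 (val p).1.
Proof. by rewrite /offd negbK => /eqP e; rewrite -{1}(sym_pair_val p) e. Qed.

Lemma offd_eq p : p = sym_pair (val p).1 (val p).2.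
Proof. by rewrite sym_pair_val. Qed.

Lemma diag_ne_offd a q : offd q -> (sym_pair a a == q) = false.
Proof.
move=> hq; apply/negbTE/eqP => e; move: hq; rewrite -e offd_sym.
by rewrite eqxx.
Qed.

Lemma samepar_refl m : samepar m m. Proof. by []. Qed.
Lemma samepar_sym m1 m2 : samepar m1 m2 -> samepar m2 m1.
Proof. by move=> h p hp; rewrite h. Qed.
Lemma samepar_trans m1 m2 m3 : samepar m1 m2 -> samepar m2 m3 -> samepar m1 m3.
Proof. by move=> h1 h2 p hp; rewrite h1 // h2. Qed.

Lemma Lrel_refl m : Lrel m m.
Proof.
exists (fun _ _ => 0) => p; rewrite subrr big1 // => i _.
by rewrite big1 // => j _; rewrite mul0r.
Qed.
Lemma Lrel_sym m1 m2 : Lrel m1 m2 -> Lrel m2 m1.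
Proof. by move=> h; apply: inLn'_ext (inLn'_opp h) => p; rewrite opprB. Qed.
Lemma Lrel_trans m1 m2 m3 : Lrel m1 m2 -> Lrel m2 m3 -> Lrel m1 m3.
Proof.
by move=> h1 h2; apply: inLn'_ext (inLn'_add h1 h2) => p; rewrite addrA subrK.
Qed.

Lemma Lrel_samepar m1 m2 : Lrel m1 m2 -> samepar m1 m2.
Proof.
move=> [c hc] p hp; apply: (@int_par _ _ (- \sum_i \sum_j c i j * ebasis i j p)).
rewrite hc mulrN mulr_sumr -sumrN; apply: eq_bigr => i _.
rewrite mulr_sumr -sumrN; apply: eq_bigr => j _.
rewrite /brk /ebasis (sym_pairC j i) !diag_ne_offd //=.
by case: (sym_pair i j == p) => /=; ring.
Qed.

Lemma uniq_normal m1 m2 : normal m1 -> normal m2 -> sameV m1 m2 -> samepar m1 m2 -> m1 = m2.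
Proof.
move=> n1 n2 hV hp; apply: mono_ext => p.
case: (boolP (offd p)) => hpo.
  by rewrite (le1_odd (n1 p hpo)) (le1_odd (n2 p hpo)) hp.
rewrite (diag_eq hpo); set v := (val p).1.
have := hV v; rewrite !Vn_alt (bigD1 v) // [in X in _ = X -> _](bigD1 v) //.
have -> : (\sum_(i < n | i != v) expo m1 (sym_pair v i) =
           \sum_(i < n | i != v) expo m2 (sym_pair v i))%N.
  apply: eq_bigr => u hu.
  have ho : offd (sym_pair v u) by rewrite offd_sym eq_sym.
  by rewrite (le1_odd (n1 _ ho)) (le1_odd (n2 _ ho)) hp.
move: (expo m1 _) (expo m2 _) (\sum_(i < n | i != v) _)%N => x y z /=; lia.
Qed.
Lemma muD m1 m2 : mu (m1 + m2)%MM = (mu m1 + mu m2)%N.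
Proof.
rewrite /mu -big_split /=; apply: eq_bigr => p _; by rewrite expoD mulnDr.
Qed.

Lemma muU q : mu (Um q) = offd q.
Proof.
rewrite /mu; under eq_bigr do rewrite expoU.
exact: (sum_indP q (fun p => offd p : nat)).
Qed.

Lemma XmD m1 m2 : Xm (m1 + m2)%MM = Xm m1 * Xm m2.
Proof. exact: mpolyXD. Qed.

Lemma Xm_sym a b : Xm (Um (sym_pair a b)) = xv k a b.
Proof. by []. Qed.

Lemma step m a b : a != b -> (2 <= expo m (sym_pair a b))%N ->
  exists m', [/\ (mu m' + 2 = mu m)%N, sameV m' m, samepar m m', Lrel m m'
               & inJn (Xm m - Xm m')].
Proof.
move=> nab h2.
set p := sym_pair a b.
have h2' : (2 <= expo m p)%N := h2.
set m0 := (m - Um p - Um p)%MM.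
have Em : m = (m0 + Um p + Um p)%MM.
  apply: mono_ext => q; rewrite !expoD !expoB !expoU.
  case: (eqVneq p q) => [<-|_] /=; lia.
exists (m0 + Um (sym_pair a a) + Um (sym_pair b b))%MM; split.
- rewrite [in RHS]Em !muD !muU !offd_sym !eqxx nab /=; lia.
- move=> v; rewrite [in RHS]Em !VnD !VnU_sym.
  by case: (a == v); case: (b == v); lia.
- move=> q hq; rewrite {1}Em !expoD !expoU !diag_ne_offd //= !addn0.
  by rewrite -addnA addnn oddD odd_double addbF.
- apply: inLn'_ext (inLn'_opp (inLn'_gen a b)) => q.
  rewrite {1}Em !expoD !expoU /brk /ebasis (sym_pairC b a).
  by case: (sym_pair a b == q); case: (sym_pair a a == q); case: (sym_pair b b == q) => /=; lia.
- rewrite {1}Em !XmD !Xm_sym.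
  have -> : Xm m0 * xv k a b * xv k a b - Xm m0 * xv k a a * xv k b b =
            - (Xm m0 * (xv k a a * xv k b b - xv k a b ^+ 2)) by ring.
  by apply/inJnN/inJnM/inJn_gen.
Qed.


Lemma reduce m : exists y, [/\ normal y, sameV y m, samepar m y, Lrel m y
                               & inJn (Xm m - Xm y)].
Proof.
have [N] := ubnP (mu m); elim: N m => // N IH m hm.
case: (boolP [forall p, offd p ==> (expo m p <= 1)%N]) => hn.
  exists m; split => //.
  - by move=> p hp; exact: (implyP (forallP hn p)).
  - exact: Lrel_refl.
  - by rewrite subrr; exact: inJn0.
move: hn; rewrite negb_forall => /existsP [p]; rewrite negb_imply -ltnNge => /andP [hpo hp2].
have hp2' : (2 <= expo m (sym_pair (val p).1 (val p).2))%N by rewrite sym_pair_val.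
have [m' [hmu hV hpar hL hJ]] := step hpo hp2'.
have [y [hy1 hy2 hy3 hy4 hy5]] : exists y, [/\ normal y, sameV y m', samepar m' y, Lrel m' y
                               & inJn (Xm m' - Xm y)].
  by apply: IH; lia.
exists y; split => //.
- by move=> v; rewrite hy2 hV.
- exact: samepar_trans hpar hy3.
- exact: Lrel_trans hL hy4.
- have -> : Xm m - Xm y = (Xm m - Xm m') + (Xm m' - Xm y) by rewrite addrA subrK.
  exact: inJnD.
Qed.

Definition nf m : 'X_{1..nvar n} := proj1_sig (constructive_indefinite_description _ (reduce m)).

Lemma nf_spec m : [/\ normal (nf m), sameV (nf m) m, samepar m (nf m), Lrel m (nf m)
                               & inJn (Xm m - Xm (nf m))].
Proof. exact: (proj2_sig (constructive_indefinite_description _ (reduce m))). Qed.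

Lemma nf_normal m : normal (nf m). Proof. by case: (nf_spec m). Qed.
Lemma nf_V m : sameV (nf m) m. Proof. by case: (nf_spec m). Qed.
Lemma nf_par m : samepar m (nf m). Proof. by case: (nf_spec m). Qed.
Lemma nf_L m : Lrel m (nf m). Proof. by case: (nf_spec m). Qed.
Lemma nf_J m : inJn (Xm m - Xm (nf m)). Proof. by case: (nf_spec m). Qed.

Lemma nf_id y : normal y -> nf y = y.
Proof.
move=> hy; apply: uniq_normal => //; [exact: nf_normal | exact: nf_V |].
exact/samepar_sym/nf_par.
Qed.

Lemma nf_eq m1 m2 : sameV m1 m2 -> samepar m1 m2 -> nf m1 = nf m2.
Proof.
move=> hV hp; apply: uniq_normal; try exact: nf_normal.
  by move=> v; rewrite nf_V hV nf_V.
apply: samepar_trans (nf_par m2); apply: samepar_trans hp.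
exact/samepar_sym/nf_par.
Qed.

Lemma pboolE (P : Prop) : pbool P = true <-> P.
Proof. by rewrite /pbool; case: excluded_middle_informative. Qed.

Lemma LequivE m1 m2 : sameV m1 m2 -> (Lequiv m1 m2 = true <-> samepar m1 m2).
Proof.
move=> hV; rewrite /Lequiv pboolE; split; first exact: Lrel_samepar.
move=> hp; apply: Lrel_trans (nf_L m1) _; rewrite (nf_eq hV hp).
exact/Lrel_sym/nf_L.
Qed.

End Reduce.

Section Classes.
Variable k : fieldType.
Variable n : nat.
Variable b : 'I_n -> nat.
Implicit Types (p q : Pair n) (m y : 'X_{1..nvar n}).

Local Notation BT := (bmultinom (nvar n) (fbound b)).
Local Notation D := (fiber b).
Local Notation P := (fclasses b).

Lemma sumVn m : (\sum_(v < n) Vn m v = 2 * mdeg m)%N.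
Proof.
rewrite /Vn big_split /= [X in (X + _)%N = _]exchange_big [X in (_ + X)%N = _]exchange_big /=.
have E : forall (f : Pair n -> 'I_n),
    (\sum_p \sum_(v < n) expo m p * (f p == v) = \sum_p expo m p)%N.
  move=> f; apply: eq_bigr => p _; rewrite -big_distrr /=.
  by under eq_bigr do rewrite eq_sym; rewrite sum_ind muln1.
rewrite (E (fun p => (val p).1)) (E (fun p => (val p).2)) addnn -mul2n.
congr (_ * _)%N; rewrite mdegE /expo /vidx.
rewrite [RHS](reindex (@enum_rank (Pair n))) //.
by exists enum_val => x _; [exact: enum_rankK | exact: enum_valK].
Qed.

Lemma inD (x : BT) : (x \in D) = [forall v, Vn (bmnm x) v == b v].
Proof. by rewrite /fiber inE. Qed.

Lemma inDV (x : BT) : x \in D -> sameV (bmnm x) (bmnm x) /\ forall v, Vn (bmnm x) v = b v.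
Proof. by rewrite inD => /forallP h; split => // v; apply/eqP. Qed.

Lemma LequivD (x z : BT) : x \in D -> z \in D ->
  (Lequiv (bmnm x) (bmnm z) = true <-> samepar (bmnm x) (bmnm z)).
Proof.
move=> /inDV [_ hx] /inDV [_ hz]; apply: (LequivE k) => v.
by rewrite hx hz.
Qed.

Lemma classP C : C \in P -> exists2 x, x \in D & C = [set z in D | Lequiv (bmnm x) (bmnm z)].
Proof. by rewrite /fclasses /equivalence_partition => /imsetP [x hx ->]; exists x. Qed.

Definition gC (C : {set BT}) : 'X_{1..nvar n} :=
  match [pick a in C] with Some a => nf k (bmnm a) | None => 0%MM end.

Lemma gC_spec C : C \in P -> exists2 a, a \in C & gC C = nf k (bmnm a).
Proof.
move=> /classP [x hx ->]; rewrite /gC; case: pickP => [a ha|none].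
  by exists a.
have : x \in [set z in D | Lequiv (bmnm x) (bmnm z)].
  by rewrite inE hx /=; apply/(LequivD hx hx).
by rewrite none.
Qed.

Definition Sq := map gC (enum P).

Lemma class_mono_J C : C \in P -> inJn (class_mono k C - Xm k (gC C)).
Proof.
move=> /classP [x hx ->]; rewrite /class_mono /gC; case: pickP => [a ha|none].
  exact: nf_J.
have : x \in [set z in D | Lequiv (bmnm x) (bmnm z)].
  by rewrite inE hx /=; apply/(LequivD hx hx).
by rewrite none.
Qed.

Lemma pplus_Sq : inJn ((\sum_(C in P) class_mono k C) - \sum_(y <- Sq) Xm k y).
Proof.
rewrite /Sq big_map big_enum /= -sumrB; apply: inJn_sum => C hC.
exact: class_mono_J.
Qed.

Lemma memSq y : (y \in Sq) <-> (normal y /\ forall v, Vn y v = b v).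
Proof.
split.
  move=> /mapP [C]; rewrite mem_enum => hC ->.
  have [a ha ->] := gC_spec hC.
  move: hC => /classP [x hx E]; move: ha; rewrite E inE => /andP [haD _].
  have [_ hV] := inDV haD.
  by split; [exact: nf_normal | move=> v; rewrite nf_V hV].
move=> [hn hV].
have hdeg : (mdeg y < fbound b)%N.
  have := sumVn y; under eq_bigr do rewrite hV.
  rewrite /fbound => h; rewrite (_ : (\sum_(v < n) b v)%N = (2 * mdeg y)%N); [lia | exact: h].
pose x : BT := BMultinom hdeg.
have hx : x \in D by rewrite inD; apply/forallP => v; apply/eqP; exact: hV.
set C := [set z in D | Lequiv (bmnm x) (bmnm z)].
have hC : C \in P by apply: imset_f.
apply/mapP; exists C; first by rewrite mem_enum.
have [a ha ->] := gC_spec hC.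
move: ha; rewrite inE => /andP [haD hxa].
have hpar : samepar (bmnm x) (bmnm a) by apply/(LequivD hx haD).
rewrite -(nf_id k hn); symmetry; apply: nf_eq => //.
  by move=> v; have [_ ->] := inDV haD; rewrite hV.
exact: samepar_sym hpar.
Qed.

Lemma uniqSq : uniq Sq.
Proof.
rewrite /Sq map_inj_in_uniq ?enum_uniq // => C1 C2; rewrite !mem_enum => h1 h2 e.
have [a1 ha1 e1] := gC_spec h1; have [a2 ha2 e2] := gC_spec h2.
have hpa : samepar (bmnm a1) (bmnm a2).
  apply: samepar_trans (nf_par k (bmnm a1)) _; rewrite -e1 e e2.
  exact/samepar_sym/nf_par.
move: h1 h2 ha1 ha2 => /classP [x1 hx1 ->] /classP [x2 hx2 ->].
rewrite !inE => /andP [ha1D h1a] /andP [ha2D h2a].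
have {ha1D} ha1D : a1 \in D by rewrite inD.
have {ha2D} ha2D : a2 \in D by rewrite inD.
have p1 := (iffLR (LequivD hx1 ha1D) h1a).
have p2 := (iffLR (LequivD hx2 ha2D) h2a).
have p12 : samepar (bmnm x1) (bmnm x2).
  apply: samepar_trans p1 _; apply: samepar_trans hpa _; exact: samepar_sym.
apply/setP => z; rewrite !inE -inD; case: (boolP (z \in D)) => hz //=.
apply/idP/idP => hh.
  have h := iffLR (LequivD hx1 hz) hh.
  by apply/(LequivD hx2 hz); apply: samepar_trans h; exact: samepar_sym.
have h := iffLR (LequivD hx2 hz) hh.
by apply/(LequivD hx1 hz); apply: samepar_trans h.
Qed.

End Classes.

Section Shift.
Variable k : fieldType.
Variable n : nat.
Implicit Types (p q : Pair n) (m y z : 'X_{1..nvar n}).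

Lemma count_diag z (a c : 'I_n) : normal z -> expo z (sym_pair a c) = 0%N -> a != c ->
  Vn z a = (n - 2 + 1)%N -> (1 <= expo z (sym_pair a a))%N.
Proof.
move=> hn h0 nac hV.
set E := expo z (sym_pair a a).
have hle : forall u : 'I_n, (expo z (sym_pair a u) <=
    ((u != a) && (u != c)) + (u == a) * E)%N.
  move=> u; have [->|nua] := eqVneq u a; first by rewrite /= mul1n add0n.
  have [->|nuc] := eqVneq u c; first by rewrite h0.
  rewrite /=.
  by rewrite mul0n addn0; apply: hn; rewrite offd_sym eq_sym.
have hs1 : (\sum_(u < n) ((u != a) && (u != c) : nat) = n - 2)%N.
  have : (\sum_(u < n) (((u == a) + (u == c)) + ((u != a) && (u != c))) = n)%N.
    rewrite -[RHS]card_ord -sum1_card; apply: eq_bigr => u _.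
    case: (eqVneq u a) => [eua|nua]; case: (eqVneq u c) => [euc|nuc] //=.
    by move: nac; rewrite -eua -euc eqxx.
  by rewrite big_split /= big_split /= !sum_ind; lia.
have hs2 : (\sum_(u < n) (u == a) * E = E)%N.
  rewrite (bigD1 a) //= eqxx mul1n big1 ?addn0 // => u /negbTE ->; by rewrite mul0n.
have : (\sum_(u : 'I_n) expo z (sym_pair a u) <=
   \sum_(u < n) (((u != a) && (u != c) : nat) + (u == a) * E))%N.
  by apply: leq_sum => u _; exact: hle.
rewrite big_split /= hs1 hs2.
move: hV; rewrite Vn_alt -/E.
have key : forall x y : nat, (x + E = n - 2 + 1 -> y <= n - 2 + E -> x = y -> 0 < E)%N.
  by move=> x y; lia.
by move=> h1 h2; apply: (key _ _ h1 h2).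
Qed.

Variables (i j l : 'I_n).
Hypotheses (hij : i != j) (hjl : j != l) (hil : i != l).

Local Notation S := (Sq k (bplus l)).
Definition Tq := map (fun y => nf k (y + Um (sym_pair i j))%MM) S.

Lemma uniqT : uniq Tq.
Proof.
rewrite /Tq map_inj_in_uniq ?uniqSq // => y1 y2 /memSq [n1 V1] /memSq [n2 V2] e.
have hp : samepar (y1 + Um (sym_pair i j))%MM (y2 + Um (sym_pair i j))%MM.
  apply: samepar_trans (nf_par k _) _; rewrite e; exact/samepar_sym/nf_par.
apply: uniq_normal => //; first by move=> v; rewrite V1 V2.
move=> q hq; have := hp q hq; rewrite !expoD !oddD.
by case: (odd (expo (Um _) q)); rewrite ?addbT ?addbF // => /negbLR; rewrite negbK.
Qed.

Lemma memT z : z \in Tq <-> normal z /\ forall v, Vn z v = (bplus l v + (v == i) + (v == j))%N.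
Proof.
have oij : offd (sym_pair i j) by rewrite offd_sym.
split.
  move=> /mapP [y /memSq [hn hV] ->]; split; first exact: nf_normal.
  by move=> v; rewrite nf_V VnD VnU_sym hV (eq_sym i) (eq_sym j) addnA.
move=> [hn hV]; apply/mapP.
have : (expo z (sym_pair i j) <= 1)%N by apply: hn.
case hE : (expo z (sym_pair i j)) => [|[|//]] _.
-
  have Eii : (1 <= expo z (sym_pair i i))%N.
    apply: (count_diag hn hE hij); rewrite hV /bplus eqxx (negbTE hil) (negbTE hij).
    by rewrite /= addn0 addn0.
  have Ejj : (1 <= expo z (sym_pair j j))%N.
    apply: (count_diag (c := i) hn _ _); first by rewrite sym_pairC.
      by rewrite eq_sym.
    rewrite hV /bplus eqxx (negbTE hjl) (eq_sym j i) (negbTE hij).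
    by rewrite /= !addn0.
  have nsd : (sym_pair i i == sym_pair j j) = false.
    by rewrite sym_pair_eq (negbTE hij).
  set w := (z - Um (sym_pair i i) - Um (sym_pair j j))%MM.
  have Ez : z = (w + Um (sym_pair i i) + Um (sym_pair j j))%MM.
    apply: mono_ext => q; rewrite !expoD !expoB !expoU.
    case: (eqVneq (sym_pair i i) q) => [e1|n1].
      by rewrite -e1 eq_sym nsd /=; lia.
    case: (eqVneq (sym_pair j j) q) => [e2|n2].
      by rewrite -e2 /=; lia.
    by rewrite /=; lia.
  have Ew : forall q, offd q -> expo w q = expo z q.
    by move=> q hq; rewrite /w !expoB !expoU !diag_ne_offd ?subn0.
  exists (w + Um (sym_pair i j))%MM.
    apply/memSq; split.
      move=> q hq; rewrite expoD expoU Ew //.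
      case: (eqVneq (sym_pair i j) q) => [<-|ne] /=; first by rewrite hE.
      by rewrite addn0; apply: hn.
    move=> v; have := hV v; rewrite Ez !VnD !VnU_sym.
    by rewrite (eq_sym v i) (eq_sym v j); case: (i == v); case: (j == v) => /=; lia.
  rewrite -{1}(nf_id k hn); apply: nf_eq.
    by move=> v; rewrite Ez !VnD !VnU_sym; lia.
  move=> q hq; rewrite {1}Ez !expoD !expoU !diag_ne_offd //= !addn0.
  by rewrite -addnA addnn oddD odd_double addbF.
-
  set y := (z - Um (sym_pair i j))%MM.
  have Ez : z = (y + Um (sym_pair i j))%MM.
    apply: mono_ext => q; rewrite !expoD !expoB !expoU.
    by case: (eqVneq (sym_pair i j) q) => [<-|_] /=; lia.
  exists y; last by rewrite -Ez nf_id.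
  apply/memSq; split.
    move=> q hq; rewrite /y expoB; apply: leq_trans (leq_subr _ _) _; exact: hn.
  move=> v; have := hV v; rewrite {1}Ez !VnD !VnU_sym (eq_sym i) (eq_sym j); lia.
Qed.

End Shift.

Lemma perm_TT (k : fieldType) (n : nat) (i j l : 'I_n) (hij : i != j) (hjl : j != l) (hil : i != l) :
  perm_eq (Tq k i j l) (Tq k j l i).
Proof.
have hli : l != i by rewrite eq_sym.
have hji : j != i by rewrite eq_sym.
apply: uniq_perm; [exact: uniqT | exact: uniqT |] => z.
apply/idP/idP.
- move=> /(memT k hij hjl hil) h; apply/(memT k hjl hli hji).
- split; first by case: h.
  by move=> v; case: h => _ ->; rewrite /bplus; lia.
- move=> /(memT k hjl hli hji) h; apply/(memT k hij hjl hil).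
  split; first by case: h.
  by move=> v; case: h => _ ->; rewrite /bplus; lia.
Qed.

Lemma inJn_sumB (k : fieldType) (n : nat) (s : seq 'X_{1..nvar n}) (F G : 'X_{1..nvar n} -> Rpoly k n) :
  (forall y, inJn (F y - G y)) -> inJn (\sum_(y <- s) F y - \sum_(y <- s) G y).
Proof. by move=> h; rewrite -sumrB; apply: inJn_sum. Qed.

Lemma xv_sum (k : fieldType) (n : nat) (i j : 'I_n) (s : seq 'X_{1..nvar n}) :
  xv k i j * (\sum_(y <- s) Xm k y) = \sum_(y <- s) Xm k (y + Um (sym_pair i j))%MM.
Proof.
rewrite mulr_sumr; apply: eq_bigr => y _.
by rewrite XmD Xm_sym mulrC.
Qed.

Lemma shiftJ (k : fieldType) (n : nat) (i j l : 'I_n) :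
  inJn (\sum_(y <- Sq k (bplus l)) Xm k (y + Um (sym_pair i j))%MM - \sum_(z <- Tq k i j l) Xm k z).
Proof.
rewrite /Tq [X in _ - X]big_map; apply: inJn_sumB => y; exact: nf_J.
Qed.

Theorem lemma2p18 (k : fieldType) (n : nat) (hn : (3 <= n)%N) (hodd : odd n)
    (i j l : 'I_n) (hij : i != j) (hjl : j != l) (hil : i != l) :
  inJn (xv k i j * pplus k l - xv k j l * pplus k i).
Proof.
have hli : l != i by rewrite eq_sym.
have hji : j != i by rewrite eq_sym.
have A1 := pplus_Sq k (bplus l).
have A2 := pplus_Sq k (bplus i).
have C1 := shiftJ k i j l.
have C2 := shiftJ k j l i.
rewrite (perm_big _ (perm_TT k hij hjl hil)) in C1.
rewrite -/(pplus k l) in A1; rewrite -/(pplus k i) in A2.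
move: A1 A2 C1 C2 (xv_sum k i j (Sq k (bplus l))) (xv_sum k j l (Sq k (bplus i))).
set SL := \sum_(y <- Sq k (bplus l)) _.
set SI := \sum_(y <- Sq k (bplus i)) _.
set UL := \sum_(y <- Sq k (bplus l)) _.
set UI := \sum_(y <- Sq k (bplus i)) _.
set T := \sum_(z <- Tq k j l i) _.
move=> A1 A2 C1 C2 eL eI.
have -> : xv k i j * pplus k l - xv k j l * pplus k i =
   xv k i j * (pplus k l - SL) + (UL - T) - ((UI - T) + xv k j l * (pplus k i - SI)).
  by rewrite !mulrBr eL eI; ring.
apply: inJnB; apply: inJnD => //; exact: inJnM.
Qed.
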